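(* Let $C\in\mathcal{M}^{or}_{(r,s)}(\Delta,F)$ be an old broccoli curve, and for $x\in\{3,4,6\}$ let $n_{(x)}$ be the number of vertices of $C$ of type $(x)$. Let $e_f$ be the number of even fixed ends of $C$ and $e_n$ the number of even non-fixed ends of $C$. Then $$n_{(3)}+n_{(4)}+e_n=n_{(6)}+e_f.$$ Consequently the broccoli index satisfies $i_B(C)=0$.
   Context: Curves. Let $r,s\ge 0$. An $(r,s)$-marked curve of degree $\Delta$ is a tuple $C=(\Gamma,h,x_1,\dots,x_{r+s})$ where $\Gamma$ is a metric graph (unbounded edges allowed) each of whose connected components is a tree, and $h:\Gamma\to\mathbb{R}^2$ is continuous, affine on each edge with integral direction vector, and satisfies the balancing condition at each vertex. The $x_1,\dots,x_{r+s}$ are distinct unbounded edges contracted by $h$ (markings; $x_1,\dots,x_r$ real, $x_{r+1},\dots,x_{r+s}$ complex); the other unbounded edges $y_1,\dots,y_n$ (ends, labeled) are not contracted, with outward direction vectors forming $\Delta=(v(y_1),\dots,v(y_n))$. The weight $w(e)$ of a non-contracted edge is the gcd of the coordinates of its direction vector; $e$ is even/odd according to $w(e)$. For a vertex with exactly three adjacent non-contracted edges with direction vectors $u,v,w$, its Mikhalkin multiplicity is $a=|\det(u,v)|$. An oriented curve carries an orientation of every non-contracted edge; $F=\{i:y_i\text{ oriented inwards}\}$ is its set of fixed ends, and $\mathcal{M}^{or}_{(r,s)}(\Delta,F)$ is the set of connected such curves. Old broccoli curves (in the sense of Gathmann–Markwig–Schroeter). An oriented curve is an old broccoli curve if every vertex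 is of one of the types: (1) adjacent to a real marking, with two odd non-contracted edges, both outgoing; (2) unmarked, 3-valent, three odd edges, two incoming, one outgoing; (3) unmarked, 3-valent, with two incoming edges one even and one odd, and one odd outgoing edge; (4) unmarked, 3-valent, three even edges, two incoming, one outgoing; (5) adjacent to a complex marking, with three odd non-contracted edges, all outgoing; (6) adjacent to a complex marking, with one even and two odd non-contracted edges, all outgoing. Broccoli index. For an oriented curve $C$ all of whose vertices are 3-valent unmarked, or adjacent to a real marking and two non-contracted edges, or adjacent to a complex marking and three non-contracted edges: let $V_{cm}$ be the set of vertices adjacent to a complex marking with even Mikhalkin multiplicity, $V_{wcm}$ the set of vertices adjacent to no marking with even Mikhalkin multiplicity, $e_f$ the number of fixed ends of even weight, $e_n$ the number of non-fixed ends of even weight. Then $i_B(C)=-\#V_{cm}-e_f+\#V_{wcm}+e_n$. *)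

(* Defs.v *)
From HB Require Import structures.
From mathcomp Require Import all_boot all_order all_algebra.
Set Implicit Arguments. Unset Strict Implicit. Unset Printing Implicit Defensive.
Import Order.TTheory GRing.Theory Num.Theory.

(* Oriented (r,s)-marked plane tropical curves of degree Delta with fixed    *)
(* ends F (the set M^or_(r,s)(Delta,F), connected curves).                  *)
(* The metric graph Gamma is encoded by a finite set V of vertices, a finite *)
(* set E of bounded edges (each with two reference endpoints src/tgt and a   *)
(* positive length) and a finite set L of unbounded edges (legs), each       *)
(* attached to one vertex.  The map h is encoded by the images posx/posy of  *)
(* the vertices and the integral direction vectors dirE (from src to tgt)    *)
(* and dirL (outward, for legs).  Orientations: orE e = true iff the bounded *)
(* edge e is oriented from src e to tgt e; a leg is oriented inwards iff it  *)
(* is a fixed end y_j with j \in F.                                          *)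

Definition zvec := (int * int)%type.

Definition weight (u : zvec) : nat := gcdn `|u.1|%N `|u.2|%N.

Definition det2 (u w : zvec) : int := (u.1 * w.2 - u.2 * w.1)%R.

Record ocurve (R : realFieldType) (r s n : nat) (Delta : 'I_n -> zvec)
    (F : {set 'I_n}) := OCurve {
  cV : finType;
  cE : finType;
  cL : finType;
  src : cE -> cV;
  tgt : cE -> cV;
  legv : cL -> cV;
  len : cE -> R;
  posx : cV -> R;
  posy : cV -> R;
  dirE : cE -> zvec;
  dirL : cL -> zvec;
  mk : 'I_(r + s) -> cL;
  yl : 'I_n -> cL;
  orE : cE -> bool;
  len_pos : forall e, (0 < len e)%R;
  affine_x : forall e, posx (tgt e) = (posx (src e) + len e * (dirE e).1%:~R)%R;
  affine_y : forall e, posy (tgt e) = (posy (src e) + len e * (dirE e).2%:~R)%R;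
  connected : forall u w : cV,
    connect (fun a b => [exists e, ((src e == a) && (tgt e == b))
                                    || ((src e == b) && (tgt e == a))]) u w;
  tree_card : #|cE|.+1 = #|cV|;
  mk_inj : injective mk;
  mk_contr : forall l, (dirL l == (0%R, 0%R)) = (l \in codom mk);
  yl_inj : injective yl;
  yl_noncontr : forall l, (dirL l != (0%R, 0%R)) = (l \in codom yl);
  yl_deg : forall j, dirL (yl j) = Delta j;
  balancing : forall v : cV,
    ((\sum_(e | src e == v) (dirE e).1 - \sum_(e | tgt e == v) (dirE e).1
      + \sum_(l | legv l == v) (dirL l).1 = 0)%R) /\
    ((\sum_(e | src e == v) (dirE e).2 - \sum_(e | tgt e == v) (dirE e).2
      + \sum_(l | legv l == v) (dirL l).2 = 0)%R)
}.

Section Flags.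
Variables (R : realFieldType) (r s n : nat) (Delta : 'I_n -> zvec)
  (F : {set 'I_n}) (C : ocurve R r s Delta F).

(* flags (edge germs at vertices): (e,true) = end src e of e,
   (e,false) = end tgt e of e, inr l = the leg l at its vertex *)
Definition flag := ((cE C * bool) + cL C)%type.

Definition fvert (f : flag) : cV C :=
  match f with
  | inl (e, true) => src e
  | inl (e, false) => tgt e
  | inr l => legv l
  end.

Definition fdir (f : flag) : zvec :=
  match f with
  | inl (e, true) => dirE e
  | inl (e, false) => (- (dirE e).1, - (dirE e).2)%R
  | inr l => dirL l
  end.

Definition leg_in (l : cL C) : bool := [exists j, (yl C j == l) && (j \in F)].

Definition fout (f : flag) : bool :=
  match f with
  | inl (e, true) => orE e
  | inl (e, false) => ~~ orE e
  | inr l => ~~ leg_in l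
  end.

Definition contracted (f : flag) : bool := fdir f == (0%R, 0%R).
Definition odd_flag (f : flag) : bool := odd (weight (fdir f)).
Definition even_flag (f : flag) : bool := ~~ contracted f && ~~ odd (weight (fdir f)).

Definition real_mark (f : flag) : bool :=
  match f with
  | inr l => [exists i : 'I_(r + s), (mk C i == l) && (i < r)%N]
  | _ => false
  end.
Definition cplx_mark (f : flag) : bool :=
  match f with
  | inr l => [exists i : 'I_(r + s), (mk C i == l) && (r <= i)%N]
  | _ => false
  end.

Definition flags_at (v : cV C) : {set flag} := [set f | fvert f == v].
Definition nc_flags_at (v : cV C) : {set flag} :=
  [set f in flags_at v | ~~ contracted f].

Definition cnt (v : cV C) (P : pred flag) : nat := #|[set f in flags_at v | P f]|.

Definition vtype1 v := [&& #|flags_at v| == 3, cnt v real_mark == 1 &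
                           cnt v [pred f | odd_flag f && fout f] == 2].
Definition vtype2 v := [&& #|flags_at v| == 3,
                           cnt v [pred f | odd_flag f && ~~ fout f] == 2 &
                           cnt v [pred f | odd_flag f && fout f] == 1].
Definition vtype3 v := [&& #|flags_at v| == 3,
                           cnt v [pred f | even_flag f && ~~ fout f] == 1,
                           cnt v [pred f | odd_flag f && ~~ fout f] == 1 &
                           cnt v [pred f | odd_flag f && fout f] == 1].
Definition vtype4 v := [&& #|flags_at v| == 3,
                           cnt v [pred f | even_flag f && ~~ fout f] == 2 &
                           cnt v [pred f | even_flag f && fout f] == 1].
Definition vtype5 v := [&& #|flags_at v| == 4, cnt v cplx_mark == 1 &
                           cnt v [pred f | odd_flag f && fout f] == 3].
Definition vtype6 v := [&& #|flags_at v| == 4, cnt v cplx_mark == 1,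
                           cnt v [pred f | even_flag f && fout f] == 1 &
                           cnt v [pred f | odd_flag f && fout f] == 2].

Definition old_broccoli : Prop :=
  forall v, [|| vtype1 v, vtype2 v, vtype3 v, vtype4 v, vtype5 v | vtype6 v].

Definition n_type (P : pred (cV C)) : nat := #|[set v | P v]|.

Definition e_f : nat := #|[set j in F | ~~ odd (weight (dirL (yl C j)))]|.
Definition e_n : nat := #|[set j | (j \notin F) && ~~ odd (weight (dirL (yl C j)))]|.

(* Mikhalkin multiplicity |det(u,v)| of a vertex with exactly three
   non-contracted adjacent edges (0 for other vertices, where it is not used) *)
Definition mikh (v : cV C) : nat :=
  match enum (nc_flags_at v) with
  | [:: f1; f2; _] => `|det2 (fdir f1) (fdir f2)|%N
  | _ => 0
  end.

Definition V_cm : {set cV C} :=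
  [set v | (cnt v cplx_mark > 0)%N && ~~ odd (mikh v)].
Definition V_wcm : {set cV C} :=
  [set v | (cnt v real_mark == 0) && (cnt v cplx_mark == 0) && ~~ odd (mikh v)].

Definition broccoli_index : int :=
  (- (#|V_cm|%:Z) - (e_f%:Z) + (#|V_wcm|%:Z) + (e_n%:Z))%R.

End Flags.

Arguments vtype1 {R r s n Delta F} C v.
Arguments vtype2 {R r s n Delta F} C v.
Arguments vtype3 {R r s n Delta F} C v.
Arguments vtype4 {R r s n Delta F} C v.
Arguments vtype5 {R r s n Delta F} C v.
Arguments vtype6 {R r s n Delta F} C v.
Arguments n_type {R r s n Delta F} C P.
Arguments old_broccoli {R r s n Delta F} C.
Arguments e_f {R r s n Delta F} C.
Arguments e_n {R r s n Delta F} C.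
Arguments broccoli_index {R r s n Delta F} C.

(* Main.v *)
Require Import Defs.
From HB Require Import structures.
From mathcomp Require Import all_boot all_order all_algebra zify.
Set Implicit Arguments. Unset Strict Implicit. Unset Printing Implicit Defensive.
Import Order.TTheory GRing.Theory Num.Theory.

Definition pz (x : int) : bool := odd `|x|%N.
Lemma pzE x : pz x = ~~ (2 %| x)%Z.
Proof. by rewrite /pz dvdzE dvdn2 negbK. Qed.
Lemma pzD x y : pz (x + y)%R = pz x (+) pz y.
Proof. rewrite !pzE. case: (boolP (2 %| x)%Z) => hx; case: (boolP (2 %| y)%Z) => hy /=;
 try (apply/negP; lia); try (apply/negPn; lia). Qed.
Lemma pzM x y : pz (x * y)%R = pz x && pz y.
Proof. by rewrite /pz abszM oddM. Qed.
Lemma pzN x : pz (- x)%R = pz x.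
Proof. by rewrite /pz abszN. Qed.
Lemma odd_weight u : odd (weight u) = pz u.1 || pz u.2.
Proof.
by rewrite /weight /pz -[odd (gcdn _ _)]negbK -dvdn2 dvdn_gcd !dvdn2 negb_and !negbK.
Qed.

Lemma det_parity (u w z : zvec) :
  (u.1 + w.1 + z.1 = 0)%R -> (u.2 + w.2 + z.2 = 0)%R ->
  odd `|det2 u w|%N = [&& odd (weight u), odd (weight w) & odd (weight z)].
Proof.
case: u w z => [u1 u2] [w1 w2] [z1 z2] /= h1 h2.
have -> : z1 = (- (u1 + w1))%R by lia.
have -> : z2 = (- (u2 + w2))%R by lia.
rewrite !odd_weight /det2 /= -/(pz _) pzD pzN pzM pzM !pzN !pzD.
by case: (pz u1); case: (pz u2); case: (pz w1); case: (pz w2).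
Qed.
Section Curve.
Variables (R : realFieldType) (r s n : nat) (Delta : 'I_n -> zvec)
  (F : {set 'I_n}) (C : ocurve R r s Delta F).

Lemma sumb_card (T : finType) (P : pred T) :
  (\sum_(x : T) (P x : nat) = #|[set x | P x]|)%N.
Proof.
rewrite -sum1_card [RHS]big_mkcond /=; apply: eq_bigr => x _; rewrite inE; by case: (P x).
Qed.

Lemma cntE (v : cV C) (P : pred (flag C)) :
  cnt v P = (\sum_(f | fvert f == v) (P f : nat))%N.
Proof.
rewrite /cnt -sumb_card [RHS]big_mkcond /=; apply: eq_bigr => f _.
by rewrite /flags_at inE; case: (fvert f == v).
Qed.

Lemma cardE' (v : cV C) : #|flags_at v| = (\sum_(f | fvert f == v) 1)%N.
Proof. by rewrite -(cntE v predT) /cnt; apply: eq_card => f; rewrite !inE andbT. Qed.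

Lemma cnt4 v (P1 P2 P3 P4 : pred (flag C)) :
  (forall f, P1 f + P2 f + P3 f + P4 f <= 1)%N ->
  (cnt v P1 + cnt v P2 + cnt v P3 + cnt v P4 <= #|flags_at v|)%N.
Proof.
move=> H; rewrite !cntE cardE' -!big_split /=; exact: leq_sum.
Qed.

Lemma cnt3le v (P1 P2 P3 Q : pred (flag C)) :
  (forall f, P1 f + P2 f + P3 f <= Q f)%N ->
  (cnt v P1 + cnt v P2 + cnt v P3 <= cnt v Q)%N.
Proof.
move=> H; rewrite !cntE -!big_split /=; exact: leq_sum.
Qed.

Lemma cnt_le v (P : pred (flag C)) : (cnt v P <= #|flags_at v|)%N.
Proof.
rewrite cntE cardE'; apply: leq_sum => f _; by case: (P f).
Qed.

Lemma cnt_mono v (P Q : pred (flag C)) : (forall f, P f -> Q f) -> (cnt v P <= cnt v Q)%N.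
Proof.
move=> H; rewrite !cntE; apply: leq_sum => f _.
by case E: (P f) => //=; rewrite H.
Qed.

Lemma cnt_full v (P : pred (flag C)) : cnt v P = #|flags_at v| ->
  forall f, fvert f = v -> P f.
Proof.
move=> H f fv.
have /eqP E : [set f in flags_at v | P f] == flags_at v.
  rewrite eqEcard -[#|[set _ in _ | _]|]/(cnt v P) H leqnn andbT.
  by apply/subsetP => g; rewrite inE => /andP[].
have : f \in flags_at v by rewrite inE fv.
by rewrite -E inE => /andP[].
Qed.

Lemma cnt_pos v (P : pred (flag C)) : (0 < cnt v P)%N -> exists f, fvert f = v /\ P f.
Proof.
rewrite /cnt card_gt0 => /set0Pn[f]; rewrite !inE => /andP[/eqP ? ?]; by exists f.
Qed.

Lemma cnt_ext v (P Q : pred (flag C)) : (forall f, fvert f = v -> P f = Q f) ->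
  cnt v P = cnt v Q.
Proof.
move=> H; rewrite /cnt; apply: eq_card => f; rewrite !inE.
by case E: (fvert f == v) => //=; rewrite H //; apply/eqP.
Qed.

Lemma flag_facts (f : flag C) :
  [/\ real_mark f -> contracted f, cplx_mark f -> contracted f,
      contracted f -> ~~ odd (weight (fdir f)) & ~~ (real_mark f && cplx_mark f)].
Proof.
split.
- case: f => [[e b]|l] //= /existsP[i /andP[/eqP <- _]].
  by rewrite /contracted /= mk_contr codom_f.
- case: f => [[e b]|l] //= /existsP[i /andP[/eqP <- _]].
  by rewrite /contracted /= mk_contr codom_f.
- by rewrite /contracted => /eqP ->.
- case: f => [[e b]|l] //=; apply/negP => /andP[/existsP[i /andP[/eqP E1 H1]]].
  move=> /existsP[j /andP[/eqP E2 H2]].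
  have ij : i = j by apply: (mk_inj (o:=C)); rewrite E1 E2.
  by move: H1 H2; rewrite ij; lia.
Qed.

End Curve.
Section Types.
Variables (R : realFieldType) (r s n : nat) (Delta : 'I_n -> zvec)
  (F : {set 'I_n}) (C : ocurve R r s Delta F).

Lemma flag_factsb (f : flag C) :
  [&& real_mark f ==> contracted f, cplx_mark f ==> contracted f,
      contracted f ==> ~~ odd (weight (fdir f)) & ~~ (real_mark f && cplx_mark f)].
Proof. by case: (flag_facts f) => h1 h2 h3 h4; rewrite h4; apply/and4P; split=> //; apply/implyP. Qed.

Ltac pw := let f := fresh "f" in intro f; move: (flag_factsb f); rewrite /= /even_flag /odd_flag;
  case: (real_mark f); case: (cplx_mark f); case: (contracted f);
  case: (odd (weight (fdir f))); case: (fout f) => //=.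

Lemma t3 v : vtype3 C v ->
  cnt v [pred f | even_flag f && fout f] = 0%N /\
  cnt v [pred f | real_mark f || cplx_mark f] = 0%N /\
  (forall f, fvert f = v -> ~~ contracted f).
Proof.
case/and4P => /eqP c /eqP c1 /eqP c2 /eqP c3.
have A := cnt4 v (P1:=[pred f | even_flag f && ~~ fout f]) (P2:=[pred f | odd_flag f && ~~ fout f])
   (P3:=[pred f | odd_flag f && fout f]) (P4:=[pred f | even_flag f && fout f]) ltac:(pw).
have B := cnt4 v (P1:=[pred f | even_flag f && ~~ fout f]) (P2:=[pred f | odd_flag f && ~~ fout f])
   (P3:=[pred f | odd_flag f && fout f]) (P4:=[pred f | real_mark f || cplx_mark f]) ltac:(pw).
have D := cnt3le v (P1:=[pred f | even_flag f && ~~ fout f]) (P2:=[pred f | odd_flag f && ~~ fout f])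
   (P3:=[pred f | odd_flag f && fout f]) (Q:=[pred f | ~~ contracted f]) ltac:(pw).
have E := cnt_le v [pred f | ~~ contracted f].
rewrite c1 c2 c3 c in A B D E.
move: A B D E; set a := cnt v _; set b := cnt v _; set d := cnt v _ => A B D E.
split; first lia. split; first lia.
have Hd : d = 3 by lia.
apply: cnt_full; rewrite c; exact: Hd.
Qed.
End Types.
Section Mikh.
Variables (R : realFieldType) (r s n : nat) (Delta : 'I_n -> zvec)
  (F : {set 'I_n}) (C : ocurve R r s Delta F).

Lemma sum_flag (v : cV C) (G : flag C -> int) :
  (\sum_(f | fvert f == v) G f = \sum_(p | fvert (inl p : flag C) == v) G (inl p)
     + \sum_(l | fvert (inr l : flag C) == v) G (inr l))%R.
Proof. exact: big_sumType. Qed.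

Lemma sum_pair (G : cE C * bool -> int) :
  (\sum_p G p = \sum_e (G (e, true) + G (e, false)))%R.
Proof.
transitivity (\sum_p G (p.1, p.2))%R; first by apply: eq_bigr => -[].
rewrite -(pair_bigA _ (fun e b => G (e, b))); apply: eq_bigr => e _; by rewrite big_bool.
Qed.

Lemma bal (v : cV C) :
  (\sum_(f | fvert f == v) (fdir f).1 = 0)%R /\ (\sum_(f | fvert f == v) (fdir f).2 = 0)%R.
Proof.
have [b1 b2] := balancing v.
split; [rewrite -[RHS]b1 | rewrite -[RHS]b2]; rewrite sum_flag /=; congr (_ + _)%R;
 rewrite big_mkcond /= sum_pair;
 rewrite [X in (_ = X - _)%R]big_mkcond [X in (_ = _ - X)%R]big_mkcond -sumrB;
 apply: eq_bigr => e _ /=;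
 case: (src e == v); case: (tgt e == v) => /=; lia.
Qed.


Lemma bal_nc (v : cV C) :
  (\sum_(f in nc_flags_at v) (fdir f).1 = 0)%R /\ (\sum_(f in nc_flags_at v) (fdir f).2 = 0)%R.
Proof.
have [h1 h2] := bal v.
split; [rewrite -[RHS]h1 | rewrite -[RHS]h2]; rewrite [RHS](bigID [pred f | contracted f]) /=;
 rewrite [X in (_ = X + _)%R]big1 ?add0r; try (by move=> f /andP[_ /eqP ->]);
 apply: eq_bigl => f; by rewrite !inE.
Qed.

Lemma mikh_char (v : cV C) : #|nc_flags_at v| = 3 ->
  odd (mikh v) = [forall f in nc_flags_at v, odd_flag f].
Proof.
move=> h3; have [s1 s2] := bal_nc v.
have Hm := mem_enum (nc_flags_at v).
move: h3 Hm s1 s2; rewrite cardE /mikh -!big_enum.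
case: (enum (nc_flags_at v)) => [|f1 [|f2 [|f3 [|]]]] //= _ Hm.
rewrite !big_cons !big_nil => s1 s2.
rewrite (@det_parity _ _ (fdir f3)); try lia.
apply/and3P/forall_inP.
- case=> o1 o2 o3 f; rewrite -Hm !inE => /or3P[] /eqP -> //.
- move=> H; split; apply: H; by rewrite -Hm !inE eqxx ?orbT.
Qed.
End Mikh.
Section Cases.
Variables (R : realFieldType) (r s n : nat) (Delta : 'I_n -> zvec)
  (F : {set 'I_n}) (C : ocurve R r s Delta F).

Ltac pw := let f := fresh "f" in intro f; move: (flag_factsb f); rewrite /= /even_flag /odd_flag;
  case: (real_mark f); case: (cplx_mark f); case: (contracted f);
  case: (odd (weight (fdir f))); case: (fout f) => //=.

Ltac absc := repeat match goal with
  | H : context [cnt ?v ?P] |- _ => let x := fresh "x" in set x := cnt v P in *; clearbody x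
  | |- context [cnt ?v ?P] => let x := fresh "x" in set x := cnt v P in *; clearbody x
  end.

Lemma ncE (v : cV C) : #|nc_flags_at v| = cnt v [pred f | ~~ contracted f].
Proof. by rewrite /cnt; apply: eq_card => f; rewrite !inE. Qed.

Lemma mikh_even (v : cV C) : #|nc_flags_at v| = 3 ->
  (exists f, fvert f = v /\ ~~ contracted f /\ ~~ odd_flag f) -> ~~ odd (mikh v).
Proof.
move=> h [f [fv [nc no]]]; rewrite mikh_char //; apply/forall_inP => H.
by move: (H f); rewrite !inE fv eqxx nc (negbTE no) => /(_ isT).
Qed.

Lemma mikh_oddL (v : cV C) : #|nc_flags_at v| = 3 ->
  (forall f, fvert f = v -> ~~ contracted f -> odd_flag f) -> odd (mikh v).
Proof.
move=> h H; rewrite mikh_char //; apply/forall_inP => f; rewrite !inE => /andP[/eqP fv nc].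
exact: H.
Qed.

Definition ein (v : cV C) := cnt v [pred f | even_flag f && ~~ fout f].
Definition eout (v : cV C) := cnt v [pred f | even_flag f && fout f].

Lemma case3 v : vtype3 C v ->
  [/\ (ein v)%:Z - (eout v)%:Z = 1, v \notin V_cm C, v \in V_wcm C & ~~ vtype4 C v && ~~ vtype6 C v]%R.
Proof.
move=> H; move: (H); case/and4P => /eqP c /eqP c1 /eqP c2 /eqP c3.
have A := cnt4 v (P1:=[pred f | even_flag f && ~~ fout f]) (P2:=[pred f | odd_flag f && ~~ fout f])
   (P3:=[pred f | odd_flag f && fout f]) (P4:=[pred f | even_flag f && fout f]) ltac:(pw).
have B := cnt4 v (P1:=[pred f | even_flag f && ~~ fout f]) (P2:=[pred f | odd_flag f && ~~ fout f])
   (P3:=[pred f | odd_flag f && fout f]) (P4:=[pred f | real_mark f || cplx_mark f]) ltac:(pw).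
have D := cnt3le v (P1:=[pred f | even_flag f && ~~ fout f]) (P2:=[pred f | odd_flag f && ~~ fout f])
   (P3:=[pred f | odd_flag f && fout f]) (Q:=[pred f | ~~ contracted f]) ltac:(pw).
have E := cnt_le v [pred f | ~~ contracted f].
have G1 := cnt_mono v (P := @real_mark _ _ _ _ _ _ C) (Q := [pred f | real_mark f || cplx_mark f])
  ltac:(by move=> f /= ->).
have G2 := cnt_mono v (P := @cplx_mark _ _ _ _ _ _ C) (Q := [pred f | real_mark f || cplx_mark f])
  ltac:(by move=> f /= ->; rewrite orbT).
have [f [fv /andP [fe _]]] := cnt_pos (v := v) (P := [pred f | even_flag f && ~~ fout f]) ltac:(by rewrite c1).
have Hm : ~~ odd (mikh v).
  apply: mikh_even; last by exists f; move: fe; rewrite /even_flag => /andP[-> ->].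
  rewrite ncE; move: c D E; absc; lia.
rewrite /ein /eout /vtype4 /vtype6 !inE Hm c c1 /= !andbT.
rewrite c1 c2 c3 in A B D.
have e0 : cnt v [pred f | even_flag f && fout f] = 0%N by lia.
have r0 : cnt v (@real_mark _ _ _ _ _ _ C) = 0%N by lia.
have k0 : cnt v (@cplx_mark _ _ _ _ _ _ C) = 0%N by lia.
by rewrite e0 r0 k0.
Qed.

Lemma case4 v : vtype4 C v ->
  [/\ (ein v)%:Z - (eout v)%:Z = 1, v \notin V_cm C, v \in V_wcm C & ~~ vtype6 C v]%R.
Proof.
move=> H; move: (H); case/and3P => /eqP c /eqP c1 /eqP c2.
have B := cnt4 v (P1:=[pred f | even_flag f && ~~ fout f]) (P2:=[pred f | even_flag f && fout f])
   (P3:=[pred f | real_mark f || cplx_mark f]) (P4:=[pred f | false]) ltac:(pw).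
have D := cnt3le v (P1:=[pred f | even_flag f && ~~ fout f]) (P2:=[pred f | even_flag f && fout f])
   (P3:=[pred f | false]) (Q:=[pred f | ~~ contracted f]) ltac:(pw).
have E := cnt_le v [pred f | ~~ contracted f].
have G1 := cnt_mono v (P := @real_mark _ _ _ _ _ _ C) (Q := [pred f | real_mark f || cplx_mark f])
  ltac:(by move=> f /= ->).
have G2 := cnt_mono v (P := @cplx_mark _ _ _ _ _ _ C) (Q := [pred f | real_mark f || cplx_mark f])
  ltac:(by move=> f /= ->; rewrite orbT).
have [f [fv /andP [fe _]]] := cnt_pos (v := v) (P := [pred f | even_flag f && ~~ fout f]) ltac:(by rewrite c1).
have Hm : ~~ odd (mikh v).
  apply: mikh_even; last by exists f; move: fe; rewrite /even_flag => /andP[-> ->].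
  rewrite ncE; move: c D E; lia.
rewrite /ein /eout /vtype6 !inE Hm c c1 c2 /= !andbT.
rewrite c1 c2 in B D.
have r0 : cnt v (@real_mark _ _ _ _ _ _ C) = 0%N by lia.
have k0 : cnt v (@cplx_mark _ _ _ _ _ _ C) = 0%N by lia.
by rewrite r0 k0.
Qed.

Lemma case6 v : vtype6 C v ->
  [/\ (ein v)%:Z - (eout v)%:Z = -1, v \in V_cm C & v \notin V_wcm C]%R.
Proof.
move=> H; move: (H); case/and4P => /eqP c /eqP c1 /eqP c2 /eqP c3.
have A := cnt4 v (P1:=@cplx_mark _ _ _ _ _ _ C) (P2:=[pred f | even_flag f && fout f])
   (P3:=[pred f | odd_flag f && fout f]) (P4:=[pred f | even_flag f && ~~ fout f]) ltac:(pw).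
have B := cnt4 v (P1:=@cplx_mark _ _ _ _ _ _ C) (P2:=[pred f | ~~ contracted f])
   (P3:=[pred f | false]) (P4:=[pred f | false]) ltac:(pw).
have D := cnt3le v (P1:=[pred f | even_flag f && fout f]) (P2:=[pred f | odd_flag f && fout f])
   (P3:=[pred f | false]) (Q:=[pred f | ~~ contracted f]) ltac:(pw).
have [f [fv /andP [fe _]]] := cnt_pos (v := v) (P := [pred f | even_flag f && fout f]) ltac:(by rewrite c2).
rewrite c c1 c2 c3 in A B D.
have Hm : ~~ odd (mikh v).
  apply: mikh_even; last by exists f; move: fe; rewrite /even_flag => /andP[-> ->].
  rewrite ncE; move: B D; lia.
have e0 : cnt v [pred f | even_flag f && ~~ fout f] = 0%N by lia.
rewrite /ein /eout !inE Hm c1 c2 e0; split; [by rewrite sub0r | by [] | by rewrite andbF].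
Qed.

Lemma case125 v : [|| vtype1 C v, vtype2 C v | vtype5 C v] ->
  [/\ (ein v)%:Z - (eout v)%:Z = 0, v \notin V_cm C & v \notin V_wcm C]%R.
Proof.
case/or3P => H.
- case/and3P: H => /eqP c /eqP c1 /eqP c2.
  have A := cnt4 v (P1:=@real_mark _ _ _ _ _ _ C) (P2:=[pred f | odd_flag f && fout f])
   (P3:=[pred f | even_flag f && ~~ fout f]) (P4:=[pred f | even_flag f && fout f]) ltac:(pw).
  have B := cnt4 v (P1:=@real_mark _ _ _ _ _ _ C) (P2:=[pred f | odd_flag f && fout f])
   (P3:=@cplx_mark _ _ _ _ _ _ C) (P4:=[pred f | false]) ltac:(pw).
  rewrite c c1 c2 in A B.
  have e0 : ein v = 0%N by rewrite /ein; lia.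
  have e1 : eout v = 0%N by rewrite /eout; lia.
  have k0 : cnt v (@cplx_mark _ _ _ _ _ _ C) = 0%N by lia.
  by rewrite e0 e1 !inE k0 c1.
- case/and3P: H => /eqP c /eqP c1 /eqP c2.
  have A := cnt4 v (P1:=[pred f | odd_flag f && ~~ fout f]) (P2:=[pred f | odd_flag f && fout f])
   (P3:=[pred f | even_flag f && ~~ fout f]) (P4:=[pred f | even_flag f && fout f]) ltac:(pw).
  have B := cnt4 v (P1:=[pred f | odd_flag f && ~~ fout f]) (P2:=[pred f | odd_flag f && fout f])
   (P3:=@cplx_mark _ _ _ _ _ _ C) (P4:=[pred f | false]) ltac:(pw).
  have D := cnt3le v (P1:=[pred f | odd_flag f && ~~ fout f]) (P2:=[pred f | odd_flag f && fout f])
   (P3:=[pred f | false]) (Q:=[pred f | ~~ contracted f]) ltac:(pw).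
  have D2 := cnt3le v (P1:=[pred f | odd_flag f && ~~ fout f]) (P2:=[pred f | odd_flag f && fout f])
   (P3:=[pred f | false]) (Q:=@odd_flag _ _ _ _ _ _ C) ltac:(pw).
  have E := cnt_le v [pred f | ~~ contracted f].
  have E2 := cnt_le v (@odd_flag _ _ _ _ _ _ C).
  rewrite c c1 c2 in A B D D2 E E2.
  have e0 : ein v = 0%N by rewrite /ein; lia.
  have e1 : eout v = 0%N by rewrite /eout; lia.
  have k0 : cnt v (@cplx_mark _ _ _ _ _ _ C) = 0%N by lia.
  have Hm : odd (mikh v).
    apply: mikh_oddL; first by rewrite ncE; lia.
    move=> f fv _.
    have Hc : cnt v (@odd_flag _ _ _ _ _ _ C) = #|flags_at v| by rewrite c; lia.
    exact: (cnt_full Hc fv).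
  by rewrite e0 e1 !inE k0 Hm /= andbF.
- case/and3P: H => /eqP c /eqP c1 /eqP c2.
  have A := cnt4 v (P1:=@cplx_mark _ _ _ _ _ _ C) (P2:=[pred f | odd_flag f && fout f])
   (P3:=[pred f | even_flag f && ~~ fout f]) (P4:=[pred f | even_flag f && fout f]) ltac:(pw).
  have B := cnt4 v (P1:=@cplx_mark _ _ _ _ _ _ C) (P2:=[pred f | ~~ contracted f])
   (P3:=[pred f | false]) (P4:=[pred f | false]) ltac:(pw).
  have D := cnt3le v (P1:=[pred f | odd_flag f && fout f]) (P2:=[pred f | false])
   (P3:=[pred f | false]) (Q:=[pred f | ~~ contracted f]) ltac:(pw).
  have D2 := cnt3le v (P1:=@cplx_mark _ _ _ _ _ _ C) (P2:=[pred f | odd_flag f && fout f])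
   (P3:=[pred f | false]) (Q:=[pred f | cplx_mark f || odd_flag f]) ltac:(pw).
  have E2 := cnt_le v [pred f | cplx_mark f || odd_flag f].
  rewrite c c1 c2 in A B D D2 E2.
  have e0 : ein v = 0%N by rewrite /ein; lia.
  have e1 : eout v = 0%N by rewrite /eout; lia.
  have Hm : odd (mikh v).
    apply: mikh_oddL; first by rewrite ncE; lia.
    move=> f fv nc.
    have Hc : cnt v [pred f | cplx_mark f || odd_flag f] = #|flags_at v| by rewrite c; lia.
    have := cnt_full Hc fv.
    move: (flag_factsb f) nc => /=; case: (cplx_mark f); case: (contracted f) => //=.
    by rewrite andbF.
  by rewrite e0 e1 !inE c1 Hm /= andbF.
Qed.
End Cases.
Section Global.
Variables (R : realFieldType) (r s n : nat) (Delta : 'I_n -> zvec)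
  (F : {set 'I_n}) (C : ocurve R r s Delta F).

Lemma vertex_info v : old_broccoli C ->
  [/\ (ein v + vtype6 C v = eout v + vtype3 C v + vtype4 C v)%N,
      (v \in V_cm C) = vtype6 C v & (v \in V_wcm C) = vtype3 C v || vtype4 C v].
Proof.
move=> OB.
case H3: (vtype3 C v).
  have [e h1 h2 /andP[/negbTE h4 /negbTE h6]] := case3 H3.
  rewrite h4 h6 (negbTE h1) h2; split => //; lia.
case H4: (vtype4 C v).
  have [e h1 h2 /negbTE h6] := case4 H4.
  rewrite h6 (negbTE h1) h2; split => //; lia.
case H6: (vtype6 C v).
  have [e h1 h2] := case6 H6.
  rewrite h1 (negbTE h2); split => //; lia.
have H : [|| vtype1 C v, vtype2 C v | vtype5 C v].
  by move: (OB v); rewrite H3 H4 H6 /= orbF.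
have [e h1 h2] := case125 H.
rewrite (negbTE h1) (negbTE h2); split => //; lia.
Qed.


Lemma sum_flag_nat (G : flag C -> nat) :
  (\sum_f G f = \sum_p G (inl p) + \sum_l G (inr l))%N.
Proof. exact: big_sumType. Qed.

Lemma sum_pair_nat (G : cE C * bool -> nat) :
  (\sum_p G p = \sum_e (G (e, true) + G (e, false)))%N.
Proof.
transitivity (\sum_p G (p.1, p.2))%N; first by apply: eq_bigr => -[].
rewrite -(pair_bigA _ (fun e b => G (e, b))); apply: eq_bigr => e _; by rewrite big_bool.
Qed.

Lemma sum_vert (G : flag C -> nat) :
  (\sum_v \sum_(f | fvert f == v) G f = \sum_f G f)%N.
Proof.
rewrite [RHS](partition_big (fun f : flag C => fvert f) predT) //=.
Qed.

Lemma even_pair e : even_flag (inl (e, false) : flag C) = even_flag (inl (e, true) : flag C).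
Proof.
rewrite /even_flag /contracted /weight /= !abszN; congr (~~ _ && _).
by rewrite !xpair_eqE !oppr_eq0.
Qed.

Lemma legs_in :
  (\sum_l ((even_flag (inr l : flag C) && ~~ fout (inr l : flag C)) : nat) = e_f C)%N.
Proof.
rewrite sumb_card /e_f -(card_imset _ (@yl_inj _ _ _ _ _ _ C)); apply: eq_card => l.
rewrite !inE /= negbK.
apply/idP/imsetP.
- move=> /andP[Hev /existsP[j /andP[/eqP E jF]]]; exists j => //.
  by rewrite inE jF /=; move: Hev; rewrite /even_flag /= -E => /andP[_ ->].
- case=> j; rewrite inE => /andP[jF Hodd] ->; apply/andP; split.
  + by rewrite /even_flag /contracted /= Hodd andbT yl_noncontr codom_f.
  + by apply/existsP; exists j; rewrite eqxx jF.
Qed.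

Lemma legs_out :
  (\sum_l ((even_flag (inr l : flag C) && fout (inr l : flag C)) : nat) = e_n C)%N.
Proof.
rewrite sumb_card /e_n -(card_imset _ (@yl_inj _ _ _ _ _ _ C)); apply: eq_card => l.
rewrite !inE /=.
apply/idP/imsetP.
- move=> /andP[Hev Hin].
  have : l \in codom (yl C).
    by rewrite -yl_noncontr; move: Hev; rewrite /even_flag /contracted /= => /andP[].
  case/codomP => j E; exists j => //; rewrite inE; apply/andP; split.
  + apply/negP => jF; move: Hin => /negP; apply; apply/existsP; exists j.
    by rewrite E eqxx jF.
  + by move: Hev; rewrite /even_flag /= E => /andP[_ ->].
- case=> j; rewrite inE => /andP[jF Hodd] ->; apply/andP; split.
  + by rewrite /even_flag /contracted /= Hodd andbT yl_noncontr codom_f.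
  + apply/negP => /existsP[j' /andP[/eqP E jF']].
    by move: (@yl_inj _ _ _ _ _ _ C _ _ E) jF' => ->; rewrite (negbTE jF).
Qed.

Lemma global_count :
  (\sum_(v : cV C) ein v + e_n C = \sum_(v : cV C) eout v + e_f C)%N.
Proof.
rewrite /ein /eout.
under eq_bigr => v _ do rewrite cntE.
under [X in (_ = X + _)%N]eq_bigr => v _ do rewrite cntE.
rewrite !sum_vert !sum_flag_nat !sum_pair_nat /= legs_in legs_out.
have -> : (\sum_e ((even_flag (inl (e, true) : flag C) && ~~ fout (inl (e, true) : flag C)) +
           (even_flag (inl (e, false) : flag C) && ~~ fout (inl (e, false) : flag C))))%N =
          (\sum_e ((even_flag (inl (e, true) : flag C) && fout (inl (e, true) : flag C)) +
           (even_flag (inl (e, false) : flag C) && fout (inl (e, false) : flag C))))%N.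
  apply: eq_bigr => e _; rewrite even_pair /=.
  by case: (even_flag _); case: (orE e).
rewrite /=; lia.
Qed.
End Global.

Theorem lemma3p6 (R : realFieldType) (r s n : nat) (Delta : 'I_n -> zvec)
    (F : {set 'I_n}) (C : ocurve R r s Delta F) :
  old_broccoli C ->
  (n_type C (vtype3 C) + n_type C (vtype4 C) + e_n C = n_type C (vtype6 C) + e_f C)%N
  /\ broccoli_index C = 0%R.
Proof.
move=> OB.
have Hv := fun v => @vertex_info _ _ _ _ _ _ C v OB.
have S1 : (\sum_(v : cV C) ein v + n_type C (vtype6 C) =
           \sum_(v : cV C) eout v + n_type C (vtype3 C) + n_type C (vtype4 C))%N.
  rewrite /n_type -!sumb_card -!big_split /=; apply: eq_bigr => v _; by case: (Hv v).
have S2 := @global_count _ _ _ _ _ _ C.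
split; first lia.
have Ecm : #|V_cm C| = n_type C (vtype6 C).
  by rewrite /n_type; apply: eq_card => v; rewrite [in RHS]inE; case: (Hv v).
have Ewcm : #|V_wcm C| = (n_type C (vtype3 C) + n_type C (vtype4 C))%N.
  have -> : #|V_wcm C| = #|[set v | vtype3 C v || vtype4 C v]|.
    by apply: eq_card => v; rewrite [in RHS]inE; case: (Hv v).
  rewrite /n_type -!sumb_card -big_split /=; apply: eq_bigr => v _.
  case H3: (vtype3 C v) => //.
  by have [_ _ _ /andP[/negbTE -> _]] := case3 H3.
rewrite /broccoli_index Ecm Ewcm.
lia.
Qed.
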